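(* Let $G$ be a group acting on a set $X$, let $A,B$ be nonempty finite subsets of $G$ and $Y$ a finite subset of $X$. Then \[|AB\cdot Y|^{2}\leq|AB|\,|B\cdot Y|\,\max_{b\in B}|Ab\cdot Y|.\] In particular, when every element of $A$ commutes with every element of $B$, \[|AB\cdot Y|^{2}\leq|AB|\,|B\cdot Y|\,|A\cdot Y|.\]
   Context: $AB=\{ab\mid a\in A,b\in B\}$, $Ab=\{ab\mid a\in A\}$, and for $S\subset G$, $S\cdot Y=\{s\cdot y\mid s\in S, y\in Y\}$. *)

(* Defs.v *)
From mathcomp Require Import all_boot.
From mathcomp Require Export finmap.
Set Implicit Arguments. Unset Strict Implicit. Unset Printing Implicit Defensive.
Open Scope fset_scope.

Record group_action (G X : choiceType) := GroupAction {
  gmul : G -> G -> G;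
  gone : G;
  ginv : G -> G;
  gmulA : associative gmul;
  gmul1 : left_id gone gmul;
  gmulV : left_inverse gone ginv gmul;
  act : G -> X -> X;
  act1 : forall x, act gone x = x;
  actM : forall g h x, act (gmul g h) x = act g (act h x)
}.

Definition setmul (G X : choiceType) (ga : group_action G X) (A B : {fset G}) : {fset G} :=
  [fset gmul ga a b | a in A, b in B].

Definition setact (G X : choiceType) (ga : group_action G X) (S : {fset G}) (Y : {fset X}) : {fset X} :=
  [fset act ga s y | s in S, y in Y].

(* Main.v *)
Require Import Defs.
From mathcomp Require Import all_boot.
From mathcomp Require Import finmap.
From mathcomp Require Import zify ring.
Open Scope fset_scope.

Lemma cover_bound (T I : choiceType) (s : seq I) (F : I -> {fset T}) (U : {fset T}) :
  (forall x, x \in U -> exists2 i, i \in s & x \in F i) ->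
  (#|` U| <= \sum_(i <- s) #|` F i|)%N.
Proof.
elim: s U => [|i s IH] U H.
  rewrite big_nil leqn0 cardfs_eq0; apply/eqP/fsetP => x; rewrite inE.
  by apply/idP => /H [].
rewrite big_cons.
have sub : U `<=` F i `|` (U `\` F i).
  by apply/fsubsetP => x xU; rewrite !inE xU; case: (x \in F i).
apply: leq_trans (fsubset_leq_card sub) _.
apply: leq_trans (leq_card_fsetU _ _).1 _.
rewrite leq_add2l; apply: IH => x; rewrite inE => /andP [xF xU].
have [j js xj] := H x xU.
move: js; rewrite inE => /orP [/eqP eji|js]; last by exists j.
by rewrite -eji xj in xF.
Qed.

Lemma disj_sum (T I : choiceType) (s : seq I) (F : I -> {fset T}) (S : {fset T}) :
  uniq s -> (forall i, i \in s -> F i `<=` S) ->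
  (forall i j x, i \in s -> j \in s -> x \in F i -> x \in F j -> i = j) ->
  (\sum_(i <- s) #|` F i| <= #|` S|)%N.
Proof.
elim: s S => [|i s IH] S us Hs Hd; first by rewrite big_nil.
rewrite big_cons.
move: us => /= /andP [nis us].
have FiS : F i `<=` S by apply: Hs; rewrite inE eqxx.
rewrite -(subnKC (fsubset_leq_card FiS)) leq_add2l -cardfsDS //.
apply: IH => // [j js|j k x js ks xj xk]; last first.
  by apply: (Hd j k x) => //; rewrite inE ?js ?ks orbT.
apply/fsubsetP => x xj; rewrite inE.
have jS : j \in i :: s by rewrite inE js orbT.
rewrite (fsubsetP (Hs j jS) x xj) andbT.
apply/negP => xi.
have eij : i = j by apply: (Hd i j x) => //; rewrite inE eqxx.
by rewrite eij js in nis.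
Qed.

Lemma key_arith (M u U p q P Q : nat) :
  (u * u <= M * (p * q))%N -> (U * U <= M * (P * Q))%N ->
  (2 * u * U <= M * (p * Q + P * q))%N.
Proof.
move=> h1 h2; rewrite -leq_sqr.
have e1 : ((2 * u * U) ^ 2 = 4 * ((u * u) * (U * U)))%N by ring.
rewrite e1.
apply: (@leq_trans (4 * ((M * (p * q)) * (M * (P * Q))))%N).
  by rewrite leq_mul2l /=; apply: leq_mul.
have e2 : (4 * ((M * (p * q)) * (M * (P * Q))) = M * M * (4 * ((p * Q) * (P * q))))%N by ring.
have e3 : ((M * (p * Q + P * q)) ^ 2 = M * M * ((p * Q + P * q) ^ 2))%N by ring.
rewrite e2 e3 leq_mul2l; apply/orP; right.
set x := (p * Q)%N; set y := (P * q)%N.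
have : (0 <= (x - y) ^ 2)%N by [].
nia.
Qed.

Lemma cs_seq (I : eqType) (s : seq I) (M : nat) (u p q : I -> nat) :
  (forall i, i \in s -> u i * u i <= M * (p i * q i))%N ->
  ((\sum_(i <- s) u i) ^ 2 <= M * ((\sum_(i <- s) p i) * (\sum_(i <- s) q i)))%N.
Proof.
elim: s => [|i s IH] H; first by rewrite !big_nil.
rewrite !big_cons.
have hi : (u i * u i <= M * (p i * q i))%N by apply: H; rewrite inE eqxx.
have hs : ((\sum_(j <- s) u j) ^ 2 <= M * ((\sum_(j <- s) p j) * (\sum_(j <- s) q j)))%N.
  by apply: IH => j js; apply: H; rewrite inE js orbT.
move: hs; set U := (\sum_(j <- s) u j); set P := (\sum_(j <- s) p j); set Q := (\sum_(j <- s) q j) => hs.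
have hs' : (U * U <= M * (P * Q))%N by rewrite mulnn.
have k := @key_arith _ _ _ _ _ _ _ hi hs'.
have e : ((u i + U) ^ 2 = u i * u i + 2 * u i * U + U * U)%N by ring.
have e' : (M * ((p i + P) * (q i + Q)) = M * (p i * q i) + M * (p i * Q + P * q i) + M * (P * Q))%N by ring.
rewrite e e'; apply: leq_add; [apply: leq_add|] => //.
Qed.

Lemma sum_const_seq (I : eqType) (s : seq I) (c : nat) :
  (\sum_(i <- s) c = size s * c)%N.
Proof. by elim: s => [|i s IH]; rewrite ?big_nil ?big_cons ?IH ?mulSn. Qed.

Section GroupFacts.
Variables (G X : choiceType) (ga : group_action G X).

Lemma mulgVr x : gmul ga x (ginv ga x) = gone ga.
Proof.
have h := gmulV ga (ginv ga x).
rewrite -[LHS](gmul1 ga) -{1}h -gmulA (gmulA ga (ginv ga x)) gmulV gmul1 //.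
Qed.

Lemma mulg1r x : gmul ga x (gone ga) = x.
Proof. by rewrite -(gmulV ga x) gmulA mulgVr gmul1. Qed.

Lemma rcancel a a' b : gmul ga a b = gmul ga a' b -> a = a'.
Proof.
move=> h; rewrite -(mulg1r a) -(mulg1r a') -(mulgVr b) !gmulA h //.
Qed.

Lemma act_inj b y y' : act ga b y = act ga b y' -> y = y'.
Proof.
move=> h; rewrite -(act1 ga y) -(act1 ga y') -(gmulV ga b) !actM h //.
Qed.

Lemma setactP S Y x : reflect (exists2 s, s \in S & exists2 y, y \in Y & x = act ga s y)
  (x \in setact ga S Y).
Proof.
rewrite /setact; apply: (iffP (imfset2P _ _ _ _ _)).
  by move=> [s sS [y yY ->]]; exists s => //; exists y.
by move=> [s sS [y yY ->]]; exists s => //; exists y.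
Qed.

Lemma setmulP A B c : reflect (exists2 a, a \in A & exists2 b, b \in B & c = gmul ga a b)
  (c \in setmul ga A B).
Proof.
rewrite /setmul; apply: (iffP (imfset2P _ _ _ _ _)).
  by move=> [s sS [y yY ->]]; exists s => //; exists y.
by move=> [s sS [y yY ->]]; exists s => //; exists y.
Qed.

Lemma memAbY A Y b x : reflect (exists2 a, a \in A & exists2 y, y \in Y & x = act ga (gmul ga a b) y)
  (x \in setact ga (setmul ga A [fset b]) Y).
Proof.
apply: (iffP (setactP _ _ _)).
  move=> [c /setmulP [a aA [b' /fset1P -> ->]] [y yY ->]].
  by exists a => //; exists y.
move=> [a aA [y yY ->]]; exists (gmul ga a b); last by exists y.
by apply/setmulP; exists a => //; exists b => //; rewrite inE.
Qed.

End GroupFacts.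

Theorem mainTheorem4 (G X : choiceType) (ga : group_action G X)
    (A B : {fset G}) (Y : {fset X}) (hA : A != fset0) (hB : B != fset0) :
  (#|` setact ga (setmul ga A B) Y| ^ 2 <=
     #|` setmul ga A B| * #|` setact ga B Y|
       * \max_(b <- B) #|` setact ga (setmul ga A [fset b]) Y|)%N
  /\
  ((forall a b, a \in A -> b \in B -> gmul ga a b = gmul ga b a) ->
   (#|` setact ga (setmul ga A B) Y| ^ 2 <=
     #|` setmul ga A B| * #|` setact ga B Y| * #|` setact ga A Y|)%N).
Proof.
set U := setact ga (setmul ga A B) Y.
set M := \max_(b <- B) #|` setact ga (setmul ga A [fset b]) Y|.
pose Pb x b := x \in setact ga (setmul ga A [fset b]) Y.
pose Ub b := [fset x in U | Pb x b && all (fun b' => Pb x b' ==> (index b B <= index b' B)%N) B].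
pose Ab b := [fset a in A | has (fun y => act ga (gmul ga a b) y \in Ub b) Y].
pose Yb b := [fset y in Y | has (fun a => act ga (gmul ga a b) y \in Ub b) A].
have UbP : forall b x, x \in Ub b ->
    [/\ x \in U, Pb x b & forall b', b' \in B -> Pb x b' -> (index b B <= index b' B)%N].
  move=> b x; rewrite !inE /= => /andP [xU /andP [Pxb /allP H]]; split => //.
  by move=> b' b'B Pxb'; move: (H b' b'B) => /implyP; apply.
have same : forall i j x x', i \in B -> j \in B -> x \in Ub i -> Pb x j ->
    x' \in Ub j -> Pb x' i -> i = j.
  move=> i j x x' iB jB /UbP [_ _ Hi] Pxj /UbP [_ _ Hj] Px'i.
  apply: (index_inj (gone ga) iB jB); apply/eqP; rewrite eqn_leq.
  by rewrite (Hi j jB Pxj) (Hj i iB Px'i).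
have cover : (#|` U| <= \sum_(b <- B) #|` Ub b|)%N.
  apply: cover_bound => x xU.
  have hasx : has (Pb x) B.
    move: xU => /setactP [c /setmulP [a aA [b bB ->]] [y yY ->]].
    by apply/hasP; exists b => //; apply/memAbY; exists a => //; exists y.
  set i := find (Pb x) B.
  have iB : (i < size B)%N.
    by rewrite /i -has_find.
  exists (nth (gone ga) B i); first exact: mem_nth.
  rewrite !inE /=; apply/andP; split => //; apply/andP; split; first exact: nth_find.
  apply/allP => b' b'B; apply/implyP => Pxb'.
  rewrite index_uniq ?fset_uniq //.
  rewrite leqNgt; apply/negP => lt.
  have := before_find (gone ga) lt.
  by rewrite nth_index // /Pb => h; rewrite /Pb h in Pxb'.
have perb : forall b, b \in B -> (#|` Ub b| * #|` Ub b| <= M * (#|` Ab b| * #|` Yb b|))%N.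
  move=> b bB; apply: leq_mul.
    apply: leq_trans (leq_bigmax_seq _ bB isT).
    by apply: fsubset_leq_card; apply/fsubsetP => x /UbP [].
  have := @cover_bound _ _ (Ab b) (fun a => [fset act ga (gmul ga a b) y | y in Yb b]) (Ub b).
  move=> h; apply: leq_trans (h _) _.
    move=> x xUb; have [_ Pxb _] := UbP _ _ xUb.
    move: Pxb => /memAbY [a aA [y yY ex]].
    exists a.
      rewrite !inE /= aA /=; apply/hasP; exists y => //; by rewrite -ex.
    apply/imfsetP; exists y => //=.
    rewrite !inE /= yY /=; apply/hasP; exists a => //; by rewrite -ex.
  rewrite -sum_const_seq; apply: leq_sum => a _.
  exact: leq_imfset_card.
have sumA : (\sum_(b <- B) #|` Ab b| <= #|` setmul ga A B|)%N.
  have -> : (\sum_(b <- B) #|` Ab b| = \sum_(b <- B) #|` [fset gmul ga a b | a in Ab b]|)%N.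
    apply: eq_bigr => b _; rewrite [RHS]card_in_imfset //=.
    by move=> a a' _ _; apply: rcancel.
  apply: disj_sum; first exact: fset_uniq.
    move=> b bB; apply/fsubsetP => c /imfsetP [a /= aAb ->].
    apply/setmulP; exists a => //; last by exists b.
    by move: aAb; rewrite !inE /= => /andP [].
  move=> i j c iB jB /imfsetP [a /= aAi ->] /imfsetP [a' /= aAj eq].
  move: aAi; rewrite !inE /= => /andP [aA /hasP [y yY xi]].
  move: aAj; rewrite !inE /= => /andP [a'A /hasP [y' y'Y xj]].
  apply: (same i j _ _ iB jB xi _ xj).
    by apply/memAbY; exists a' => //; exists y => //; rewrite eq.
  by apply/memAbY; exists a => //; exists y' => //; rewrite eq.
have sumY : (\sum_(b <- B) #|` Yb b| <= #|` setact ga B Y|)%N.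
  have -> : (\sum_(b <- B) #|` Yb b| = \sum_(b <- B) #|` [fset act ga b y | y in Yb b]|)%N.
    apply: eq_bigr => b _; rewrite [RHS]card_in_imfset //=.
    by move=> y y' _ _; apply: act_inj.
  apply: disj_sum; first exact: fset_uniq.
    move=> b bB; apply/fsubsetP => z /imfsetP [y /= yYb ->].
    apply/setactP; exists b => //; exists y => //.
    by move: yYb; rewrite !inE /= => /andP [].
  move=> i j z iB jB /imfsetP [y /= yYi ->] /imfsetP [y' /= yYj eq].
  move: yYi; rewrite !inE /= => /andP [yY /hasP [a aA xi]].
  move: yYj; rewrite !inE /= => /andP [y'Y /hasP [a' a'A xj]].
  apply: (same i j _ _ iB jB xi _ xj).
    by apply/memAbY; exists a => //; exists y' => //; rewrite !actM eq.
  by apply/memAbY; exists a' => //; exists y => //; rewrite !actM eq.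
have main : (#|` U| ^ 2 <= #|` setmul ga A B| * #|` setact ga B Y| * M)%N.
  have h1 : (#|` U| ^ 2 <= (\sum_(b <- B) #|` Ub b|) ^ 2)%N by rewrite leq_sqr.
  apply: leq_trans h1 _.
  have h2 := @cs_seq _ B M (fun b => #|` Ub b|) (fun b => #|` Ab b|) (fun b => #|` Yb b|) perb.
  apply: leq_trans h2 _.
  rewrite mulnC; apply: leq_mul => //; exact: leq_mul.
split => // comm.
apply: leq_trans main _; apply: leq_mul => //.
apply/bigmax_leqP_seq => b bB _.
apply: leq_trans (_ : #|` [fset act ga b w | w in setact ga A Y]| <= _)%N; last first.
  exact: leq_imfset_card.
apply: fsubset_leq_card; apply/fsubsetP => x /memAbY [a aA [y yY ->]].
apply/imfsetP; exists (act ga a y) => /=; first by apply/setactP; exists a => //; exists y.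
by rewrite comm // actM.
Qed.
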